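(* Let $\Omega\subset\mathbb{R}^2$ be compact with non-empty interior and let $G=\frac{1}{\mathrm{Area}(\Omega)}\int_\Omega y\,dy$ be its barycenter. Then for every $\varepsilon>0$ there exists $H>0$ such that for every $h\ge H$, every solid angle center of $\Omega$ of height $h$ lies at distance less than $\varepsilon$ from $G$. In other words, solid angle centers of height $h$ converge to the barycenter of $\Omega$ as $h\to+\infty$.
   Context: For a compact $\Omega\subset\mathbb{R}^2$ with non-empty interior, $h>0$ and $x\in\mathbb{R}^2$, $A_\Omega^{(h)}(x)=\int_\Omega \frac{h}{(|y-x|^2+h^2)^{3/2}}\,dy$. A point $x$ is a solid angle center of $\Omega$ of height $h$ if it maximizes $A_\Omega^{(h)}$ over $\mathbb{R}^2$. $\mathrm{Area}$ denotes Lebesgue measure. *)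

(* Defs.v *)
From HB Require Import structures.
From mathcomp Require Import all_boot all_order all_algebra.
From mathcomp Require Import all_classical all_reals all_analysis.
Set Implicit Arguments. Unset Strict Implicit. Unset Printing Implicit Defensive.
Import Order.TTheory GRing.Theory Num.Theory.
Import numFieldNormedType.Exports.
Local Open Scope classical_set_scope.
Local Open Scope ring_scope.

Definition leb2 (R : realType) :=
  ((@lebesgue_measure R) \x (@lebesgue_measure R))%E.

Definition sqdist2 (R : realType) (x y : R * R) : R :=
  (y.1 - x.1) ^+ 2 + (y.2 - x.2) ^+ 2.
Definition dist2 (R : realType) (x y : R * R) : R := Num.sqrt (sqdist2 x y).

Definition area (R : realType) (Om : set (R * R)) : R := fine (@leb2 R Om).

Definition barycenter (R : realType) (Om : set (R * R)) : R * R :=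
  ((area Om)^-1 * Rintegral (@leb2 R) Om (fun y => y.1),
   (area Om)^-1 * Rintegral (@leb2 R) Om (fun y => y.2)).

Definition solid_angle (R : realType) (Om : set (R * R)) (h : R) (x : R * R) : R :=
  Rintegral (@leb2 R) Om (fun y => h / ((sqdist2 x y + h ^+ 2) `^ (3 / 2))).

Definition solid_angle_center (R : realType) (Om : set (R * R)) (h : R) (x : R * R) :=
  forall z : R * R, solid_angle Om h z <= solid_angle Om h x.

(* Main.v *)
Require Import Defs.
From HB Require Import structures.
From mathcomp Require Import all_boot all_order all_algebra.
From mathcomp Require Import all_classical all_reals all_analysis.
From mathcomp Require Import ring lra.
Import Order.TTheory GRing.Theory Num.Theory.
Import numFieldNormedType.Exports.
Local Open Scope classical_set_scope.
Local Open Scope ring_scope.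
Set Implicit Arguments. Unset Strict Implicit.
Section S.
Variable R : realType.


Lemma poly_low (w : R) : 1 <= w -> (1 - 3/2 * (w^+2 - 1)) * w^+3 <= 1.
Proof.
move=> w1; set v := w - 1.
have v0 : 0 <= v by rewrite /v subr_ge0.
have -> : w = 1 + v by rewrite /v; ring.
rewrite -subr_ge0.
have -> : 1 - (1 - 3/2 * ((1+v)^+2 - 1)) * (1+v)^+3 =
   v^+2 * (15/2 + 25/2 * v + 15/2 * v^+2 + 3/2 * v^+3) by field.
apply: mulr_ge0; first exact: sqr_ge0.
by rewrite !addr_ge0 // mulr_ge0 // exprn_ge0.
Qed.

Lemma poly_up (w : R) : 1 <= w -> 1 <= (1 - 3/2 * (w^+2 - 1) + 2 * (w^+2-1)^+2) * w^+3.
Proof.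
move=> w1; set v := w - 1.
have v0 : 0 <= v by rewrite /v subr_ge0.
have -> : w = 1 + v by rewrite /v; ring.
rewrite -subr_ge0.
have -> : (1 - 3/2 * ((1+v)^+2 - 1) + 2 * ((1+v)^+2-1)^+2) * (1+v)^+3 - 1 =
   v^+2 * (1/2 + 39/2 * v + 85/2 * v^+2 + 73/2 * v^+3 + 14 * v^+4 + 2 * v^+5) by field.
apply: mulr_ge0; first exact: sqr_ge0.
by rewrite !addr_ge0 // mulr_ge0 // exprn_ge0.
Qed.

Definition Fh (h u : R) := h / ((u + h ^+ 2) `^ (3 / 2)).

Lemma Fh_sqrt h u : 0 < h -> 0 <= u ->
  Fh h u = h / ((u + h^+2) * Num.sqrt (u + h^+2)).
Proof.
move=> h0 u0; rewrite /Fh.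
have p0 : 0 <= u + h^+2 by rewrite addr_ge0 // sqr_ge0.
have -> : (3/2 : R) = 1 + 2^-1 by field.
rewrite powRD; last by apply/implyP => _; rewrite gt_eqF // ltr_wpDl // exprn_gt0.
by rewrite powRr1 // powR12_sqrt.
Qed.

Lemma Fh_low h u : 0 < h -> 0 <= u ->
  h^-2 - 3/2 * u * h^-4 <= Fh h u.
Proof.
move=> h0 u0; rewrite Fh_sqrt //.
set r := Num.sqrt (u + h^+2).
have r2 : r^+2 = u + h^+2 by rewrite sqr_sqrtr // addr_ge0 // sqr_ge0.
have hr : h <= r.
  rewrite -[X in X <= _](ger0_norm (ltW h0)) -sqrtr_sqr /r ler_sqrt.
    by rewrite -subr_ge0 addrK.
  by rewrite addr_ge0 // sqr_ge0.
set w := r / h.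
have w1 : 1 <= w by rewrite /w ler_pdivlMr // mul1r.
have hw : r = h * w by rewrite /w; field; rewrite gt_eqF.
have w0 : 0 < w by apply: lt_le_trans w1.
have ue : u = h^+2 * (w^+2 - 1) by rewrite -(addrK (h^+2) u) -r2 hw; ring.
rewrite hw ue.
have -> : h^-2 - 3/2 * (h^+2 * (w^+2 - 1)) * h^-4 = h^-2 * (1 - 3/2 * (w^+2 - 1)).
  by field; rewrite gt_eqF.
have -> : h / ((h^+2 * (w^+2 - 1) + h^+2) * (h * w)) = h^-2 * (w^+3)^-1.
  by rewrite (_ : _ + _ = h^+2 * w^+2); [field; rewrite !gt_eqF|ring].
have hi : 0 < h^-2 by rewrite invr_gt0 exprn_gt0.
rewrite ler_pM2l //.
by rewrite -[w^-3]div1r ler_pdivlMr ?exprn_gt0 // poly_low.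
Qed.

Lemma Fh_up h u : 0 < h -> 0 <= u ->
  Fh h u <= h^-2 - 3/2 * u * h^-4 + 2 * u^+2 * h^-6.
Proof.
move=> h0 u0; rewrite Fh_sqrt //.
set r := Num.sqrt (u + h^+2).
have r2 : r^+2 = u + h^+2 by rewrite sqr_sqrtr // addr_ge0 // sqr_ge0.
have hr : h <= r.
  rewrite -[X in X <= _](ger0_norm (ltW h0)) -sqrtr_sqr /r ler_sqrt.
    by rewrite -subr_ge0 addrK.
  by rewrite addr_ge0 // sqr_ge0.
set w := r / h.
have w1 : 1 <= w by rewrite /w ler_pdivlMr // mul1r.
have hw : r = h * w by rewrite /w; field; rewrite gt_eqF.
have w0 : 0 < w by apply: lt_le_trans w1.
have ue : u = h^+2 * (w^+2 - 1) by rewrite -(addrK (h^+2) u) -r2 hw; ring.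
rewrite hw ue.
have -> : h^-2 - 3/2 * (h^+2 * (w^+2 - 1)) * h^-4 + 2 * (h^+2 * (w^+2 - 1))^+2 * h^-6
   = h^-2 * (1 - 3/2 * (w^+2 - 1) + 2 * (w^+2 - 1)^+2).
  by field; rewrite gt_eqF.
have -> : h / ((h^+2 * (w^+2 - 1) + h^+2) * (h * w)) = h^-2 * (w^+3)^-1.
  by rewrite (_ : _ + _ = h^+2 * w^+2); [field; rewrite !gt_eqF|ring].
have hi : 0 < h^-2 by rewrite invr_gt0 exprn_gt0.
rewrite ler_pM2l //.
by rewrite -[w^-3]div1r ler_pdivrMr ?exprn_gt0 // poly_up.
Qed.

Lemma Fh_ge0 h u : 0 < h -> 0 <= Fh h u.
Proof. by move=> h0; apply: divr_ge0; [exact: ltW|exact: powR_ge0]. Qed.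

Lemma Fh_decr h u v : 0 < h -> 0 <= u -> u <= v -> Fh h v <= Fh h u.
Proof.
move=> h0 u0 uv; rewrite /Fh ler_pM2l // lef_pV2 ?posrE ?powR_gt0 //.
- by rewrite ge0_ler_powR ?nnegrE ?addr_ge0 ?sqr_ge0 // ?(le_trans u0) // lerD2r.
- by rewrite ltr_wpDl ?(le_trans u0) // exprn_gt0.
- by rewrite ltr_wpDl ?exprn_gt0.
Qed.



Definition box (q : rat * rat * rat) : set (R * R) :=
  `]ratr q.1.1 - ratr q.2, ratr q.1.1 + ratr q.2[%classic `*`
  `]ratr q.1.2 - ratr q.2, ratr q.1.2 + ratr q.2[%classic.

Lemma open_meas2 (U : set (R * R)) : open U -> measurable U.
Proof.
move=> oU.
pose F (q : rat * rat * rat) := if pselect (box q `<=` U) then box q else set0.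
have -> : U = \bigcup_q F q.
  apply/seteqP; split; last first.
    by move=> z [q _]; rewrite /F; destruct (pselect (box q `<=` U)) as [H|] => //= /H.
  move=> p Up.
  have := oU p Up; rewrite /= => /nbhs_ballP[e /= e0 eU].
  have [r /itvP rr] : exists r : rat, ratr r \in `]0, e / 2[.
    by apply: rat_in_itvoo; rewrite divr_gt0.
  have r0 : (0 : R) < ratr r by rewrite rr.
  have [a /itvP ra] : exists a : rat, ratr a \in `]p.1 - ratr r, p.1[.
    by apply: rat_in_itvoo; rewrite ltrBlDr ltrDl.
  have [b /itvP rb] : exists b : rat, ratr b \in `]p.2 - ratr r, p.2[.
    by apply: rat_in_itvoo; rewrite ltrBlDr ltrDl.
  have re : ratr r < e / 2 by rewrite rr.
  have a1 : p.1 - ratr r < ratr a by rewrite ra.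
  have a2 : ratr a < p.1 by rewrite ra.
  have b1 : p.2 - ratr r < ratr b by rewrite rb.
  have b2 : ratr b < p.2 by rewrite rb.
  exists (a, b, r) => //.
  have bU : box (a, b, r) `<=` U.
    move=> z [/= z1 z2]; apply: eU.
    move: z1 z2; rewrite !in_itv /= => /andP[z1 z1'] /andP[z2 z2'].
    split => /=.
    - rewrite /ball /= distrC ltr_distl; apply/andP; split; lra.
    - rewrite /ball /= distrC ltr_distl; apply/andP; split; lra.
  rewrite /F; destruct (pselect (box (a,b,r) `<=` U)) as [bb|nb]; last by exfalso.
  rewrite /box /=; split; rewrite /= in_itv /=; apply/andP; split; lra.
apply: countable_bigcupT_measurable; first exact: countableP.
move=> q; rewrite /F; destruct (pselect (box q `<=` U)) => //=.
by apply: measurableX; exact: measurable_itv.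
Qed.
Local Notation mu := (@leb2 R).

Lemma compact_box (Om : set (R * R)) : compact Om ->
  exists M : R, 0 < M /\ forall y, Om y -> `|y.1| <= M /\ `|y.2| <= M.
Proof.
move=> /compact_bounded [N [Nr HN]].
exists (Num.max N 0 + 1); split; first by rewrite ltr_wpDl // le_max lexx orbT.
move=> y Oy; have := HN (Num.max N 0 + 1) _ y Oy.
have lt : N < Num.max N 0 + 1 by rewrite ltr_pwDr // le_max lexx.
move=> /(_ lt) /=; rewrite prod_normE /= ge_max => /andP[] //.
Qed.

Lemma compact_meas (Om : set (R * R)) : compact Om -> measurable Om.
Proof.
move=> cO; have cl : closed Om by apply: compact_closed => //; exact: norm_hausdorff.
rewrite -(setCK Om); apply: measurableC; apply: open_meas2.
by rewrite openC.
Qed.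

Lemma leb_itv (a b : R) : (a < b)%R -> lebesgue_measure (`]a, b[%classic : set R) = (b - a)%:E.
Proof. by move=> ab; rewrite lebesgue_measure_itv /= lte_fin ab -EFinD. Qed.

Lemma mu_box (a b c d : R) : (a < b)%R -> (c < d)%R ->
  mu (`]a, b[%classic `*` `]c, d[%classic) = ((b - a) * (d - c))%:E.
Proof.
move=> ab cd; rewrite /leb2 product_measure1E; try exact: measurable_itv.
have e1 := leb_itv ab; have e2 := leb_itv cd.
rewrite EFinM -e1 -e2 //.
Qed.

Lemma compact_fin (Om : set (R * R)) : compact Om -> (mu Om < +oo)%E.
Proof.
move=> cO; have [M [M0 HM]] := compact_box cO.
have sub : Om `<=` `]-M - 1, M + 1[%classic `*` `]-M - 1, M + 1[%classic.
  move=> y /HM [y1 y2]; split; rewrite /= in_itv /=; apply/andP;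
  move: y1 y2; rewrite !ler_norml => /andP[? ?] /andP[? ?]; split; lra.
apply: (@le_lt_trans _ _ (mu (`]-M - 1, M + 1[%classic `*` `]-M - 1, M + 1[%classic))).
  apply: le_measure => //.
  - by rewrite inE; exact: compact_meas.
  - by rewrite inE; apply: measurableX; exact: measurable_itv.
by rewrite mu_box ?ltey //; lra.
Qed.

Lemma area_gt0 (Om : set (R * R)) : compact Om -> Om° !=set0 -> 0 < area Om.
Proof.
move=> cO [p /= /nbhs_ballP [e /= e0 eO]].
rewrite /area; apply: fine_gt0; rewrite compact_fin // andbT.
apply: (@lt_le_trans _ _ (mu (`]p.1 - e, p.1 + e[%classic `*` `]p.2 - e, p.2 + e[%classic))).
  by rewrite mu_box ?lte_fin; [apply: mulr_gt0|..]; lra.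
apply: le_measure.
- by rewrite inE; apply: measurableX; exact: measurable_itv.
- by rewrite inE; exact: compact_meas.
move=> z [/= z1 z2]; apply: eO; move: z1 z2; rewrite !in_itv /= => /andP[? ?] /andP[? ?].
by split; rewrite /ball /= distrC ltr_distl; apply/andP; split; lra.
Qed.
End S.

Section T.
Variable R : realType.
Local Notation mu := (@leb2 R).
Variable Om : set (R * R).
Hypothesis cO : compact Om.

Let mO : measurable Om := compact_meas cO.
Let fO : (mu Om < +oo)%E := compact_fin cO.

Lemma integ (f : R * R -> R) : measurable_fun setT f ->
  (exists K, forall y, Om y -> `|f y| <= K) -> mu.-integrable Om (EFin \o f).
Proof.
move=> mf [K HK]; apply: measurable_bounded_integrable => //.
  exact: measurable_funS mf.
exists K; split; first exact: num_real.
by move=> M KM y Oy; rewrite /= (le_trans (HK _ Oy)) // ltW.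
Qed.

Lemma mf_c1 : measurable_fun setT (fun y : R * R => y.1).
Proof. exact: measurable_fst. Qed.
Lemma mf_c2 : measurable_fun setT (fun y : R * R => y.2).
Proof. exact: measurable_snd. Qed.

Lemma mf_sq (x : R * R) : measurable_fun setT (fun y => sqdist2 x y).
Proof.
rewrite /sqdist2; apply: measurable_realfun.measurable_funD; apply: measurable_realfun.measurable_funX;
  apply: measurable_realfun.measurable_funB; (exact: mf_c1 || exact: mf_c2 || exact: measurable_cst).
Qed.

Lemma Fh_pow (h u : R) : 0 < h -> Fh h u = h * (u + h^+2) `^ (- (3/2)).
Proof. by move=> h0; rewrite /Fh powRN. Qed.

Lemma mf_Fh (h : R) (x : R * R) : 0 < h -> measurable_fun setT (fun y => Fh h (sqdist2 x y)).
Proof.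
move=> h0; rewrite (_ : (fun y => _) = (fun y => h * (sqdist2 x y + h^+2) `^ (- (3/2)))); last first.
  by apply: funext => y; rewrite Fh_pow.
apply: measurable_realfun.measurable_funM; first exact: measurable_cst.
apply: (measurableT_comp (measurable_realfun.measurable_powR _)).
apply: measurable_realfun.measurable_funD; [exact: mf_sq | exact: measurable_cst].
Qed.

Lemma bnd : exists M : R, 0 < M /\ forall y, Om y -> `|y.1| <= M /\ `|y.2| <= M.
Proof. exact: compact_box. Qed.

Lemma int_c1 : mu.-integrable Om (EFin \o (fun y : R * R => y.1)).
Proof.
apply: integ; first exact: mf_c1.
by have [M [_ HM]] := bnd; exists M => y /HM [].
Qed.

Lemma int_c2 : mu.-integrable Om (EFin \o (fun y : R * R => y.2)).
Proof.
apply: integ; first exact: mf_c2.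
by have [M [_ HM]] := bnd; exists M => y /HM [].
Qed.

Lemma int_cst (c : R) : mu.-integrable Om (EFin \o (fun y : R * R => c)).
Proof. by apply: integ; [exact: measurable_cst| exists `|c|]. Qed.

Lemma int_Zl (c : R) (f : R * R -> R) : mu.-integrable Om (EFin \o f) ->
  mu.-integrable Om (EFin \o (fun y => c * f y)).
Proof.
move=> i; have := @integrableZl _ _ _ mu _ mO c _ i.
by apply: eq_integrable.
Qed.

Lemma int_D (f g : R * R -> R) : mu.-integrable Om (EFin \o f) ->
  mu.-integrable Om (EFin \o g) -> mu.-integrable Om (EFin \o (fun y => f y + g y)).
Proof.
move=> i j; have := @integrableD _ _ _ mu _ mO _ _ i j.
by apply: eq_integrable.
Qed.

Lemma int_S2 : mu.-integrable Om (EFin \o (fun y : R * R => y.1 ^+ 2 + y.2 ^+ 2)).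
Proof.
apply: integ.
  apply: measurable_realfun.measurable_funD; apply: measurable_realfun.measurable_funX;
  [exact: mf_c1 | exact: mf_c2].
have [M [_ HM]] := bnd; exists (M^+2 + M^+2) => y /HM [h1 h2].
rewrite ger0_norm ?addr_ge0 ?sqr_ge0 //.
by apply: lerD; rewrite -real_normK ?num_real // lerXn2r ?nnegrE // ?normr_ge0 // (le_trans _ h1).
Qed.

Definition I1 := Rintegral mu Om (fun y => y.1).
Definition I2 := Rintegral mu Om (fun y => y.2).
Definition S2 := Rintegral mu Om (fun y => y.1 ^+ 2 + y.2 ^+ 2).
Definition Q (x : R * R) := Rintegral mu Om (fun y => sqdist2 x y).

Lemma Q_expand (x : R * R) : Q x = S2 + (-2 * x.1) * I1 + (-2 * x.2) * I2 + (x.1^+2 + x.2^+2) * area Om.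
Proof.
rewrite /Q (@eq_Rintegral _ _ _ mu Om (fun y : R * R => (y.1 ^+ 2 + y.2 ^+ 2) + ((-2 * x.1) * y.1 + ((-2 * x.2) * y.2 + (x.1^+2 + x.2^+2))))); last first.
  by move=> y _; rewrite /sqdist2; ring.
have iA := int_D (int_Zl (-2 * x.2) int_c2) (int_cst (x.1^+2 + x.2^+2)).
have iB := int_D (int_Zl (-2 * x.1) int_c1) iA.
rewrite (RintegralD _ int_S2 iB) ?(RintegralD _ (int_Zl (-2 * x.1) int_c1) iA);
  rewrite ?(RintegralD _ (int_Zl (-2 * x.2) int_c2) (int_cst (x.1^+2 + x.2^+2))); try exact: mO.
rewrite (@RintegralZl _ _ _ mu Om (fun y => y.1) (-2 * x.1)); [|exact: mO|exact: int_c1].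
rewrite (@RintegralZl _ _ _ mu Om (fun y => y.2) (-2 * x.2)); [|exact: mO|exact: int_c2].
rewrite Rintegral_cst // /S2 /I1 /I2 /area /leb2; ring.
Qed.

Lemma sq_le (a b : R) : `|a| <= b -> a ^+ 2 <= b ^+ 2.
Proof.
move=> ab; rewrite -real_normK ?num_real // lerXn2r ?nnegrE // ?normr_ge0 //.
exact: le_trans ab.
Qed.

Lemma int_sq (x : R * R) : mu.-integrable Om (EFin \o (fun y => sqdist2 x y)).
Proof.
apply: integ; first exact: mf_sq.
have [M [_ HM]] := bnd; exists ((`|x.1| + M)^+2 + (`|x.2| + M)^+2) => y /HM [h1 h2].
rewrite ger0_norm /sqdist2 ?addr_ge0 ?sqr_ge0 //.
apply: lerD; apply: sq_le; rewrite (le_trans (ler_normB _ _)) // addrC lerD2l //.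
Qed.

Lemma int_Fh (h : R) (x : R * R) : 0 < h -> mu.-integrable Om (EFin \o (fun y => Fh h (sqdist2 x y))).
Proof.
move=> h0; apply: integ; first exact: mf_Fh.
exists (Fh h 0) => y _; rewrite ger0_norm ?Fh_ge0 //.
by apply: Fh_decr => //; rewrite /sqdist2 addr_ge0 // sqr_ge0.
Qed.

Lemma int_lin (x : R * R) (al be : R) :
  Rintegral mu Om (fun y => al + be * sqdist2 x y) = al * area Om + be * Q x.
Proof.
rewrite (RintegralD _ (int_cst al) (int_Zl be (int_sq x))); last exact: mO.
rewrite (@RintegralZl _ _ _ mu Om (fun y => sqdist2 x y) be); [|exact: mO|exact: int_sq].
by rewrite Rintegral_cst //; exact: mO.
Qed.

Lemma low_A (h : R) (x : R * R) : 0 < h ->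
  h^-2 * area Om + (- (3/2) * h^-4) * Q x <= solid_angle Om h x.
Proof.
move=> h0; rewrite -int_lin.
apply: le_Rintegral; [exact: mO| apply: int_D; [exact: int_cst| exact: int_Zl (int_sq x)]|exact: int_Fh|].
move=> y _; rewrite -/(Fh h (sqdist2 x y)).
have := Fh_low h0 (_ : 0 <= sqdist2 x y); rewrite /sqdist2 addr_ge0 ?sqr_ge0 // => /(_ isT).
by apply: le_trans; rewrite le_eqVlt; apply/orP; left; apply/eqP; ring.
Qed.

Lemma up_A1 (h K : R) (x : R * R) : 0 < h -> (forall y, Om y -> sqdist2 x y <= K) ->
  solid_angle Om h x <= (h^-2 + 2 * K^+2 * h^-6) * area Om + (- (3/2) * h^-4) * Q x.
Proof.
move=> h0 HK; rewrite -int_lin.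
apply: le_Rintegral; [exact: mO|exact: int_Fh| apply: int_D; [exact: int_cst| exact: int_Zl (int_sq x)]|].
move=> y Oy; rewrite -/(Fh h (sqdist2 x y)).
have u0 : 0 <= sqdist2 x y by rewrite /sqdist2 addr_ge0 ?sqr_ge0.
apply: (le_trans (Fh_up h0 u0)).
have : (sqdist2 x y)^+2 <= K^+2 by apply: sq_le; rewrite ger0_norm // HK.
have h6 : 0 < h^-6 by rewrite invr_gt0 exprn_gt0.
move=> hK; have := ler_wpM2r (ltW h6) hK => hK'.
set u := sqdist2 x y in hK' *; nra.
Qed.

Lemma up_A2 (h m : R) (x : R * R) : 0 < h -> 0 <= m -> (forall y, Om y -> m <= sqdist2 x y) ->
  solid_angle Om h x <= (h^-2 - 3/2 * m * h^-4 + 2 * m^+2 * h^-6) * area Om.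
Proof.
move=> h0 m0 Hm; rewrite -(Rintegral_cst _ _); last exact: mO.
apply: le_Rintegral; [exact: mO|exact: int_Fh|exact: int_cst|].
move=> y Oy; rewrite -/(Fh h (sqdist2 x y)).
by apply: le_trans (Fh_up h0 m0); apply: Fh_decr => //; exact: Hm.
Qed.

Lemma Q_diff (x : R * R) : area Om != 0 ->
  Q x = Q (barycenter Om) + area Om * sqdist2 x (barycenter Om).
Proof.
move=> a0; rewrite !Q_expand /barycenter /sqdist2 /= /I1 /I2.
by field.
Qed.

Lemma Q_ge0 (x : R * R) : 0 <= Q x.
Proof. by apply: Rintegral_ge0 => y _; rewrite /sqdist2 addr_ge0 ?sqr_ge0. Qed.
End T.

Unset Implicit Arguments.
Theorem theorem3p2 (R : realType) (Om : set (R * R)) :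
  compact Om -> Om° !=set0 ->
  forall eps : R, 0 < eps ->
  exists H : R, 0 < H /\
    forall h : R, H <= h ->
    forall x : R * R, solid_angle_center Om h x ->
      dist2 x (barycenter Om) < eps.
Proof.
move=> cO iO eps e0.
have a0 := area_gt0 cO iO; set a := area Om in a0.
have [M [M0 HM]] := compact_box cO.
set G := barycenter Om.
have QGle : Q Om G <= 2 * M^+2 * a.
  have := Q_diff cO (0, 0) (lt0r_neq0 a0); rewrite -/G -/a => e.
  have d0 : 0 <= sqdist2 (0, 0) G by rewrite /sqdist2 addr_ge0 ?sqr_ge0.
  have : Q Om G <= Q Om (0, 0).
    by rewrite e -subr_ge0 addrC addKr mulr_ge0 // ltW.
  move/le_trans; apply.
  rewrite /a -Rintegral_cst; last exact: compact_meas.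
  apply: le_Rintegral; [exact: compact_meas|exact: int_sq|exact: int_cst|].
  move=> y /HM [h1 h2]; rewrite /sqdist2 /= !subr0.
  by rewrite mulr2n mulrDl mul1r lerD // sq_le.
have QG0 := Q_ge0 Om G.
set m := 2 * M^+2 + 1.
have m0 : 0 <= m by rewrite /m addr_ge0 // mulr_ge0 // sqr_ge0.
set T := M + m + 1.
set K := 2 * (T + M)^+2.
have K0 : 0 < K by rewrite /K mulr_gt0 // exprn_gt0 // addr_gt0 // /T; lra.
have Ke : 0 < 2 * K / eps by rewrite divr_gt0 // mulr_gt0.
exists (2 * K / eps + 2 * m + 1); split; first lra.
move=> h hH x cx.
have h0 : 0 < h.
  by apply: lt_le_trans hH; lra.
have AG := low_A cO G h0.
have AGx := cx G.
set t := h^-2.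
have t0 : 0 < t by rewrite /t invr_gt0 exprn_gt0.
have e4 : h^-4 = t^+2 by rewrite /t exprVn -exprM.
have e6 : h^-6 = t^+3 by rewrite /t exprVn -exprM.
rewrite e4 in AG.
have AGx' := le_trans AG AGx.
set d := sqdist2 x G.
have d0 : 0 <= d by rewrite /d /sqdist2 addr_ge0 ?sqr_ge0.
have eQ := Q_diff cO x (lt0r_neq0 a0); rewrite -/G -/a -/d in eQ.
have [/andP[x1 x2]|nx] := boolP ((`|x.1| <= T) && (`|x.2| <= T)).
- have HK : forall y, Om y -> sqdist2 x y <= K.
    move=> y /HM [y1 y2]; rewrite /sqdist2 /K mulr2n mulrDl mul1r.
    apply: lerD; apply: sq_le; rewrite (le_trans (ler_normB _ _)) // addrC lerD //.
  have up := up_A1 cO h0 HK; rewrite e4 e6 eQ -/a in up.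
  have := le_trans AGx' up; rewrite -subr_ge0.
  have -> : (t + 2 * K ^+ 2 * t ^+ 3) * a + - (3 / 2) * t ^+ 2 * (Q Om G + a * d) -
    (t * a + - (3 / 2) * t ^+ 2 * Q Om G) = (t^+2 * a) * (2 * (K^+2 * t) - 3/2 * d) by ring.
  rewrite pmulr_rge0 ?mulr_gt0 ?exprn_gt0 // => hd.
  have hKe : 4 * (K^+2 * t) <= eps^+2.
    have : (2 * K)^+2 <= (eps * h)^+2.
      apply: sq_le; rewrite ger0_norm; last by rewrite mulr_ge0 // ltW.
      apply: ltW.
      have : 2 * K / eps < h by clear -hH m0; lra.
      by rewrite ltr_pdivrMr // [h * _]mulrC.
    move=> hh; rewrite mulrA (_ : 4 * K^+2 = (2 * K)^+2); last by ring.
    rewrite /t -ler_pdivlMr ?invr_gt0 ?exprn_gt0 // invrK.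
    by rewrite -exprMn.
  rewrite /dist2 -/G -/d.
  have : d < eps^+2.
    have : 0 < eps^+2 by rewrite exprn_gt0.
    clear -hd hKe d0; lra.
  by rewrite -ltr_sqrt ?exprn_gt0 // sqrtr_sqr ger0_norm // ltW.
- exfalso.
  have Hm : forall y, Om y -> m <= sqdist2 x y.
    move=> y /HM [y1 y2].
    have key : forall a b : R, `|b| <= M -> T < `|a| -> m <= (b - a)^+2.
      move=> p q hq hp.
      have : m + 1 <= `|q - p|.
        rewrite distrC (le_trans _ (lerB_dist _ _)) //.
        rewrite /T in hp; clear -hp hq; lra.
      move=> hh.
      have := @sq_le _ (m + 1) (`|q - p|); rewrite ger0_norm; last by rewrite addr_ge0. move=> /(_ hh).
      rewrite real_normK ?num_real // => h2.
      apply: le_trans h2; rewrite -subr_ge0.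
      have -> : (m + 1)^+2 - m = m^+2 + m + 1 by ring.
      by apply: addr_ge0; [apply: addr_ge0; [exact: sqr_ge0|exact: m0]|exact: ler01].
    rewrite /sqdist2; move: nx; rewrite negb_and -!ltNge => /orP[nx|nx].
    - by apply: (le_trans (key _ _ y1 nx)); rewrite lerDl sqr_ge0.
    - by apply: (le_trans (key _ _ y2 nx)); rewrite lerDr sqr_ge0.
  have up := up_A2 cO h0 m0 Hm; rewrite e4 e6 -/t -/a in up.
  have := le_trans AGx' up; rewrite -/t -/a -subr_ge0.
  have -> : (t - 3 / 2 * m * t ^+ 2 + 2 * m ^+ 2 * t ^+ 3) * a -
    (t * a + - (3 / 2) * t ^+ 2 * Q Om G) = t^+2 * (3/2 * Q Om G - 3/2 * m * a + 2 * m^+2 * t * a) by ring.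
  rewrite pmulr_rge0 ?exprn_gt0 // => hq.
  have hq2 : 0 <= a * (2 * (m^+2 * t) - 3/2).
    have -> : a * (2 * (m^+2 * t) - 3/2) = (3/2 * Q Om G - 3/2 * m * a + 2 * m^+2 * t * a) + 3/2 * (2 * M^+2 * a - Q Om G) by rewrite /m; ring.
    by rewrite addr_ge0 // mulr_ge0 // subr_ge0.
  rewrite pmulr_rge0 // in hq2.
  have h2 : (2 * m)^+2 < h^+2.
    have : 2 * m < h by clear -hH Ke; lra.
    move=> hm; rewrite -subr_gt0 subr_sqr mulr_gt0 //; first by rewrite subr_gt0.
    by clear -h0 m0; lra.
  have : 4 * (m^+2 * t) < 1.
    rewrite mulrA /t (_ : 4 * m^+2 = (2 * m)^+2); last by ring.
    by rewrite ltr_pdivrMr ?exprn_gt0 // mul1r.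
  by clear -hq2; lra.
Qed.
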